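(* Let $q$ be even, $P_{22}\in\mathbb{S}_q$ with $P_{22}\succ0$, $Q_{22}\in\mathbb{S}_q$ with $Q_{22}\succ0$, $\Theta_2\in\mathbb{A}_q$ nonsingular, and suppose the complex Hermitian matrix $P_{22}+i\Theta_2$ is positive semi-definite. Let $\Xi\in\mathbb{A}_q$, and set $N:=Q_{22}^{-1}\Xi$, $S:=\Theta_2P_{22}^{-1}$. Let $D\in\mathbb{R}^{p\times m_1}$ with $DD^{T}=I_p$ and $\Delta:=DJ_1D^{T}$. If $\rho(N)<1$, then the three linear operators $$X\mapsto X-NXS\ \text{on}\ \mathbb{R}^{q\times q},\qquad X\mapsto X-NXJ_2\ \text{on}\ \mathbb{R}^{q\times m_2},\qquad X\mapsto X-NX\Delta\ \text{on}\ \mathbb{R}^{q\times p}$$ are all invertible.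
   Context: $\mathbb{S}_k$ and $\mathbb{A}_k$ denote the spaces of real symmetric and real antisymmetric $k\times k$ matrices; $\rho(\cdot)$ is the spectral radius; $i=\sqrt{-1}$. For even $m_k$, $\mu_k=m_k/2$ and $J_k:=\begin{bmatrix}0&I_{\mu_k}\\-I_{\mu_k}&0\end{bmatrix}$ ($k=1,2$). *)

(* Defs.v *)
From HB Require Import structures.
From mathcomp Require Import all_boot all_order all_algebra.
Set Implicit Arguments. Unset Strict Implicit. Unset Printing Implicit Defensive.
Import Order.TTheory GRing.Theory Num.Theory.
Local Open Scope ring_scope.

(* Throughout, C is an algebraically closed numeric field (e.g. the complex
   numbers); "real matrices" are matrices over C with entries in Num.real. *)

Section Defs.
Variable C : numClosedFieldType.

Definition real_mx {m n} (A : 'M[C]_(m, n)) : Prop := A \is a realmx.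

Definition sym_real {n} (A : 'M[C]_n) : Prop := real_mx A /\ A^T = A.
Definition antisym_real {n} (A : 'M[C]_n) : Prop := real_mx A /\ A^T = - A.

Definition ctrmx {m n} (A : 'M[C]_(m, n)) : 'M[C]_(n, m) := (map_mx Num.conj A)^T.

Definition posdef_real {n} (A : 'M[C]_n) : Prop :=
  sym_real A /\
  forall x : 'cV[C]_n, real_mx x -> x != 0 -> 0 < (x^T *m A *m x) 0 0.

Definition hermitian {n} (A : 'M[C]_n) : Prop := ctrmx A = A.
Definition psd_herm {n} (A : 'M[C]_n) : Prop :=
  hermitian A /\ forall x : 'cV[C]_n, 0 <= (ctrmx x *m A *m x) 0 0.

Definition eigenvalues {n} (A : 'M[C]_n) : seq C :=
  sval (closed_field_poly_normal (char_poly A)).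

Definition spectral_radius {n} (A : 'M[C]_n) : C :=
  \big[Num.max/0]_(z <- eigenvalues A) `|z|.

(* J_k for m_k = mu + mu *)
Definition Jmx (mu : nat) : 'M[C]_(mu + mu) :=
  block_mx 0 1%:M (- 1%:M) 0.

Definition invertible_on_real {q k} (L : 'M[C]_(q, k) -> 'M[C]_(q, k)) : Prop :=
  (forall X, real_mx X -> real_mx (L X)) /\
  forall Y, real_mx Y -> exists! X, real_mx X /\ L X = Y.

End Defs.

(* Main.v *)
Require Import Defs.
From HB Require Import structures.
From mathcomp Require Import all_boot all_order all_algebra.
Import Order.TTheory GRing.Theory Num.Theory.
Local Open Scope ring_scope.
Set Implicit Arguments. Unset Strict Implicit.

Section S.
Variable C : numClosedFieldType.

Lemma realE m n (A : 'M[C]_(m, n)) : real_mx A <-> map_mx Num.conj A = A.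
Proof.
split.
  by move=> /mxOverP H; apply/matrixP=> i j; rewrite mxE; apply/eqP; rewrite -CrealE.
by move=> H; apply/mxOverP=> i j; rewrite CrealE -{2}H mxE.
Qed.

Lemma realM m n p (A : 'M[C]_(m, n)) (B : 'M[C]_(n, p)) :
  real_mx A -> real_mx B -> real_mx (A *m B).
Proof. by move=> /realE HA /realE HB; apply/realE; rewrite map_mxM HA HB. Qed.

Lemma realB m n (A B : 'M[C]_(m, n)) :
  real_mx A -> real_mx B -> real_mx (A - B).
Proof. by move=> /realE HA /realE HB; apply/realE; rewrite map_mxB HA HB. Qed.

Lemma realT m n (A : 'M[C]_(m, n)) : real_mx A -> real_mx A^T.
Proof. by move=> /realE HA; apply/realE; rewrite -map_trmx HA. Qed.

Lemma realV n (A : 'M[C]_n) : real_mx A -> real_mx (invmx A).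
Proof. by move=> /realE HA; apply/realE; rewrite map_invmx HA. Qed.

Definition Lop q k (N : 'M[C]_q) (S : 'M[C]_k) (X : 'M[C]_(q, k)) := X - N *m X *m S.

Fact Lop_lin q k (N : 'M[C]_q) (S : 'M[C]_k) : linear (Lop N S).
Proof.
move=> a X Y; rewrite /Lop mulmxDr mulmxDl -scalemxAr -scalemxAl.
by rewrite scalerBr; rewrite opprD addrACA.
Qed.

HB.instance Definition _ q k (N : 'M[C]_q) (S : 'M[C]_k) :=
  GRing.isLinear.Build C 'M[C]_(q, k) 'M[C]_(q, k) _ (Lop N S) (Lop_lin N S).

Lemma inv_of_inj q k (N : 'M[C]_q) (S : 'M[C]_k) : real_mx N -> real_mx S ->
  (forall X, X - N *m X *m S = 0 -> X = 0) ->
  invertible_on_real (fun X => X - N *m X *m S).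
Proof.
move=> rN rS inj.
have injL : forall X Y : 'M[C]_(q,k), Lop N S X = Lop N S Y -> X = Y.
  move=> X Y h; apply/eqP; rewrite -subr_eq0; apply/eqP/inj.
  by have := linearB (Lop N S) X Y; rewrite /= h subrr.
pose M := lin_mx (Lop N S).
have uM : M \in unitmx.
  rewrite unitmxE unitfE; apply/negP => /det0P [v nz vM].
  move: nz; rewrite -(vec_mxK v) => /negP; apply; apply/eqP.
  apply: (can_inj vec_mxK); apply: injL.
  have := mul_rV_lin (Lop N S) v; rewrite -/M vM => /esym h.
  rewrite linear0; apply: (can_inj mxvecK). rewrite vec_mxK h !linear0 //.
split.
  by move=> X rX; apply: realB => //; apply: realM => //; apply: realM.
move=> Y rY.
pose X := vec_mx (mxvec Y *m invmx M).
have LX : Lop N S X = Y.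
  by rewrite -mx_rV_lin -/M mulmxKV // mxvecK.
exists X; split; last first.
  by move=> X' [_ h]; apply: injL; rewrite LX.
split => //.
apply/realE; apply: injL.
rewrite LX -{1}((realE Y).1 rY) -LX /Lop.
by rewrite !map_mxB !map_mxM ((realE N).1 rN) ((realE S).1 rS).
Qed.

Lemma one_factor m k (S : 'M[C]_k) :
  (forall (w : 'rV[C]_k) mu, w != 0 -> w *m S = mu *: w -> `|mu| <= 1) ->
  forall z : C, `|z| < 1 -> forall X : 'M[C]_(m, k), X *m (1%:M - z *: S) = 0 -> X = 0.
Proof.
move=> HS z hz X HX; apply/row_matrixP => i; rewrite row0.
have h : row i X *m (1%:M - z *: S) = 0 by rewrite -row_mul HX row0.
move: h; set w := row i X => h.
move: h; rewrite mulmxBr mulmx1 -scalemxAr => /eqP; rewrite subr_eq0 => /eqP h.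
have [z0|nz] := eqVneq z 0; first by rewrite h z0 scale0r.
apply/eqP; apply/negP => /negP wnz.
have : w *m S = z^-1 *: w by rewrite {2}h scalerA mulVf // scale1r.
move=> /(HS _ _ wnz); rewrite normfV invf_le1 ?normr_gt0 // => h1; have := le_lt_trans h1 hz; by rewrite ltxx.
Qed.

Lemma inj_core q' k (N : 'M[C]_q'.+1) (S : 'M[C]_k) :
 (forall z, z \in eigenvalues N -> `|z| < 1) ->
 (forall (w : 'rV[C]_k) mu, w != 0 -> w *m S = mu *: w -> `|mu| <= 1) ->
 forall X : 'M[C]_(q'.+1, k), X - N *m X *m S = 0 -> X = 0.
Proof.
move=> HN HS X /eqP; rewrite subr_eq0 => /eqP /esym HX.
have commS : forall s : seq C, GRing.comm S (\prod_(z <- s) (1 - z *: S)).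
  move=> s; apply: commr_prod => z _.
  by rewrite /GRing.comm mulrBr mulrBl mulr1 mul1r -!mulmxE -scalemxAr -scalemxAl.
have key : forall (s : seq C) (Y : 'M[C]_(q'.+1, k)), N *m Y *m S = Y ->
  (\prod_(z <- s) (N - z%:M)) *m Y *m S ^+ size s = Y *m \prod_(z <- s) (1 - z *: S).
  move=> s; elim: s => [|a s IH] Y hY.
    by rewrite !big_nil expr0 mul1mx mulmx1.
  rewrite !big_cons /= exprSr.
  set P := \prod_(z <- s) (N - z%:M); set Q := \prod_(z <- s) (1 - z *: S).
  have -> : (N - a%:M) * P *m Y *m (S ^+ size s * S) = (N - a%:M) *m (P *m Y *m S ^+ size s) *m S.
    by rewrite -!mulmxE !mulmxA.
  rewrite IH // mulmxBl mul_scalar_mx mulmxBl -/Q.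
  have -> : N *m (Y *m Q) *m S = Y *m Q.
    by rewrite !mulmxA -(mulmxA _ Q) mulmxE -(commS s) -mulmxE mulmxA hY.
  have -> : (1 - a *: S) * Q = Q * (1 - a *: S).
    by rewrite mulrBr mulrBl mulr1 mul1r -!mulmxE -scalemxAr -scalemxAl !mulmxE (commS s).
  by rewrite -mulmxE mulmxA mulmxBr mulmx1 -scalemxAr scalemxAl.
have CH := Cayley_Hamilton N.
move: HN; rewrite /eigenvalues; case: closed_field_poly_normal => r /= hp HN.
rewrite (monicP (char_poly_monic N)) scale1r in hp.
move: CH; rewrite hp rmorph_prod.
under eq_bigr => z _ do rewrite rmorphB /= horner_mx_X horner_mx_C.
move=> CH.
have := key r X HX.
rewrite CH !mul0mx => /esym.
clear hp; elim: r X HN {HX CH} => [|a s IH] X HN.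
  by rewrite big_nil mulmx1.
rewrite big_cons -mulmxE mulmxA => /IH h.
apply: (one_factor HS (z := a)); first by apply: HN; rewrite inE eqxx.
by apply: h => z zs; apply: HN; rewrite inE zs orbT.
Qed.

Lemma scal_bound (a u : C) : 0 < a -> 0 <= a + u -> 0 <= a - u -> `|u| <= a.
Proof.
move=> a0 h1 h2.
have ur : u \is Num.real.
  have -> : u = (a + u) - a by rewrite addrAC subrr add0r.
  by apply: rpredB; apply: ger0_real => //; apply: ltW.
rewrite real_ler_norml // -subr_ge0 h2 andbT.
by rewrite -subr_ge0 opprK addrC.
Qed.

Lemma tr00 (A : 'M[C]_1) : A 0 0 = A^T 0 0.
Proof. by rewrite mxE. Qed.

Lemma ctrmx_mul m n p (A : 'M[C]_(m, n)) (B : 'M[C]_(n, p)) :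
  ctrmx (A *m B) = ctrmx B *m ctrmx A.
Proof. by rewrite /ctrmx map_mxM trmx_mul. Qed.

Lemma ctrmx_conj m n (A : 'M[C]_(m, n)) : ctrmx (map_mx Num.conj A) = A^T.
Proof.
rewrite /ctrmx; congr trmx; apply/matrixP => i j; rewrite !mxE.
by rewrite conjCK.
Qed.

Lemma key_bound n (P T : 'M[C]_n) : P^T = P -> T^T = -T ->
  (forall x : 'cV[C]_n, 0 <= (ctrmx x *m (P + 'i *: T) *m x) 0 0) ->
  (forall x : 'cV[C]_n, x != 0 -> 0 < (ctrmx x *m P *m x) 0 0) ->
  forall (x : 'cV[C]_n) nu, x != 0 -> T *m x = nu *: (P *m x) -> `|nu| <= 1.
Proof.
move=> PT TT Hpsd Hpos x nu xnz Hx.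
have expand : forall (c : C), (ctrmx x *m (P + c *: T) *m x) 0 0 =
    (ctrmx x *m P *m x) 0 0 + c * (ctrmx x *m T *m x) 0 0.
  move=> c; rewrite mulmxDr mulmxDl -scalemxAr -scalemxAl.
  by rewrite !mxE.
have h1 := Hpsd x.
have h2 : 0 <= (ctrmx x *m (P + - 'i *: T) *m x) 0 0.
  have := Hpsd (map_mx Num.conj x).
  rewrite ctrmx_conj tr00 !trmx_mul trmxK /ctrmx -/(ctrmx x).
  have -> : (P + 'i *: T)^T = P + - 'i *: T.
    by rewrite linearD /= linearZ /= PT TT scalerN scaleNr.
  by rewrite mulmxA.
rewrite expand in h1; rewrite expand in h2.
have ha := Hpos x xnz.
have hc : (ctrmx x *m T *m x) 0 0 = nu * (ctrmx x *m P *m x) 0 0.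
  by rewrite -mulmxA Hx -scalemxAr mxE mulmxA.
move: h1 h2 ha; rewrite hc.
set a := (ctrmx x *m P *m x) 0 0 => h1 h2 ha.
rewrite mulNr in h2; have := scal_bound ha h1 h2.
rewrite normrM normCi mul1r normrM (gtr0_norm ha) => h.
by rewrite -(ler_pM2r ha) mul1r.
Qed.

Lemma cnorm_eq n (x : 'cV[C]_n) : (ctrmx x *m x) 0 0 = \sum_i `|x i 0| ^+ 2.
Proof. by rewrite mxE; apply: eq_bigr => i _; rewrite !mxE normCKC. Qed.

Lemma cnorm_ge0 n (x : 'cV[C]_n) : 0 <= (ctrmx x *m x) 0 0.
Proof. by rewrite cnorm_eq; apply: sumr_ge0 => i _; apply: exprn_ge0. Qed.

Lemma cnorm_gt0 n (x : 'cV[C]_n) : x != 0 -> 0 < (ctrmx x *m 1%:M *m x) 0 0.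
Proof.
move=> xnz; rewrite mulmx1 lt_def cnorm_ge0 andbT.
apply: contra xnz; rewrite cnorm_eq => /eqP h.
have h2 := psumr_eq0P (fun i _ => exprn_ge0 2 (normr_ge0 (x i 0))) h.
apply/eqP/matrixP => i j; rewrite ord1 mxE.
by have := h2 i isT => /eqP; rewrite expf_eq0 /= normr_eq0 => /eqP.
Qed.

Lemma cpos n (P : 'M[C]_n) : posdef_real P ->
  forall x : 'cV[C]_n, x != 0 -> 0 < (ctrmx x *m P *m x) 0 0.
Proof.
move=> [[rP PT] Hpos] x xnz.
pose r := map_mx (fun z => 'Re z) x; pose s := map_mx (fun z => 'Im z) x.
have rr : real_mx r by apply/mxOverP => i j; rewrite mxE Creal_Re.
have rs : real_mx s by apply/mxOverP => i j; rewrite mxE Creal_Im.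
have hx : x = r + 'i *: s.
  by apply/matrixP => i j; rewrite !mxE -Crect.
have hcx : ctrmx x = r^T - 'i *: s^T.
  apply/matrixP => i j; rewrite !mxE {1}[x j i]Crect rmorphD rmorphM /= conjCi.
  by rewrite !conj_Creal ?Creal_Re ?Creal_Im // mulNr.
have ePr : forall v w : 'cV[C]_n, (v^T *m P *m w) 0 0 = (w^T *m P *m v) 0 0.
  by move=> v w; rewrite tr00 !trmx_mul trmxK PT mulmxA.
have hv : forall v : 'cV[C]_n, real_mx v -> 0 <= (v^T *m P *m v) 0 0 /\
     (v != 0 -> 0 < (v^T *m P *m v) 0 0).
  move=> v rv; split; last exact: Hpos.
  have [->|vnz] := eqVneq v 0; first by rewrite mulmx0 mxE.
  exact/ltW/Hpos.
have -> : (ctrmx x *m P *m x) 0 0 = (r^T *m P *m r) 0 0 + (s^T *m P *m s) 0 0.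
  rewrite hcx hx -mulmxA mulmxDr -scalemxAr mulmxBl mulmxDr -!scalemxAl -scalemxAr.
  rewrite mulmxDr -scalemxAr !mulmxA.
  set A := r^T *m P *m r; set B := r^T *m P *m s; set E := s^T *m P *m r; set F := s^T *m P *m s.
  have hBE : B 0 0 = E 0 0 by rewrite /B /E ePr.
  clearbody A B E F; rewrite !mxE hBE mulrDr mulrA mulCii !mulN1r.
  by rewrite opprD opprK addrA addrK.
have [rz|rnz] := eqVneq r 0.
  have snz : s != 0 by apply: contra xnz => /eqP sz; rewrite hx rz sz scaler0 addr0.
  have [hA _] := hv r rr; have [_ hF] := hv s rs.
  exact: (ltr_wpDl hA (hF snz)).
have [_ hA] := hv r rr; have [hF _] := hv s rs.
exact: (ltr_pwDl (hA rnz) hF).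
Qed.

Lemma unit_posdef n (P : 'M[C]_n) : posdef_real P -> P \in unitmx.
Proof.
move=> hP; have PT := hP.1.2.
rewrite unitmxE unitfE; apply/negP => /det0P [v vnz vP].
have xnz : v^T != 0 by apply: contra vnz => /eqP h; rewrite -(trmxK v) h trmx0.
have hpos := cpos hP xnz.
have e : P *m v^T = 0 by rewrite -PT -trmx_mul vP trmx0.
by move: hpos; rewrite -mulmxA e mulmx0 mxE ltxx.
Qed.

Lemma boundS n (P T : 'M[C]_n) : posdef_real P -> antisym_real T ->
  psd_herm (P + 'i *: T) ->
  forall (w : 'rV[C]_n) mu, w != 0 -> w *m (T *m invmx P) = mu *: w -> `|mu| <= 1.
Proof.
move=> hP hT hpsd w mu wnz h.
have Pu := unit_posdef hP.
have PT := hP.1.2; have TT := hT.2.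
have e1 : (w *m (T *m invmx P))^T = (mu *: w)^T by rewrite h.
rewrite !trmx_mul linearZ /= trmx_inv PT TT mulmxN mulNmx in e1.
have e2 : T *m w^T = (- mu) *: (P *m w^T).
  have := congr1 (mulmx P) e1; rewrite mulmxN -mulmxA mulKVmx // => /(congr1 (fun A => - A)); rewrite opprK => ->.
  by rewrite -scalemxAr scaleNr.
have xnz : w^T != 0 by apply: contra wnz => /eqP h0; rewrite -(trmxK w) h0 trmx0.
rewrite -normrN; apply: (key_bound PT TT hpsd.2 (cpos hP) xnz e2).
Qed.

Lemma J_real mu : map_mx Num.conj (Jmx C mu) = Jmx C mu.
Proof. by rewrite /Jmx map_block_mx map_mxN map_mx1 map_mx0. Qed.

Lemma J_tr mu : (Jmx C mu)^T = - Jmx C mu.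
Proof. by rewrite /Jmx tr_block_mx !trmx0 trmx1 linearN /= trmx1 opp_block_mx !oppr0 opprK. Qed.

Lemma J_sq mu : Jmx C mu *m Jmx C mu = - 1%:M.
Proof.
rewrite /Jmx mulmx_block !mul0mx !mulmx0 mul1mx mulmx1 !addr0 !add0r.
by rewrite scalar_mx_block opp_block_mx !oppr0.
Qed.

Lemma psd_J mu : forall x : 'cV[C]_(mu + mu),
  0 <= (ctrmx x *m (1%:M + 'i *: Jmx C mu) *m x) 0 0.
Proof.
move=> x; set M := 1%:M + 'i *: Jmx C mu.
have cM : ctrmx M = M.
  rewrite /ctrmx /M map_mxD map_mxZ map_mx1 J_real /= conjCi linearD /= linearZ /=.
  by rewrite trmx1 J_tr scaleNr scalerN opprK.
have MM : M *m M = 2%:R *: M.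
  rewrite /M mulmxDr !mulmxDl mul1mx mulmx1 mul1mx -scalemxAr -scalemxAl scalerA mulCii J_sq scaleN1r opprK.
  by rewrite scalerDr -[2]/(1+1) !scalerDl !scale1r [X in _ + X]addrC addrACA.
have := cnorm_ge0 (M *m x).
rewrite ctrmx_mul cM mulmxA -(mulmxA _ M M) MM -scalemxAr -scalemxAl mxE.
by rewrite pmulr_rge0 // ltr0n.
Qed.

Lemma boundT n (T : 'M[C]_n) : T^T = -T ->
  (forall x : 'cV[C]_n, 0 <= (ctrmx x *m (1%:M + 'i *: T) *m x) 0 0) ->
  forall (w : 'rV[C]_n) mu, w != 0 -> w *m T = mu *: w -> `|mu| <= 1.
Proof.
move=> TT hpsd w mu wnz h.
have e1 : (w *m T)^T = (mu *: w)^T by rewrite h.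
rewrite trmx_mul linearZ /= TT mulNmx in e1.
have e2 : T *m w^T = (- mu) *: (1%:M *m w^T).
  by rewrite mul1mx scaleNr -e1 opprK.
have xnz : w^T != 0 by apply: contra wnz => /eqP h0; rewrite -(trmxK w) h0 trmx0.
rewrite -normrN; apply: (key_bound (trmx1 _ _) TT hpsd _ xnz e2).
by move=> x; apply: cnorm_gt0.
Qed.

Lemma spec_lt n (N : 'M[C]_n) : spectral_radius N < 1 ->
  forall z, z \in eigenvalues N -> `|z| < 1.
Proof.
rewrite /spectral_radius; elim: (eigenvalues N) => [|a s IH] //.
rewrite big_cons => h z.
set m := \big[_/_]_(_ <- s) _ in h.
have cmp : (`|a| >=< m)%O.
  apply: real_comparable; first exact: normr_real.
  by apply: bigmax_real => // i _; exact: normr_real.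
rewrite inE => /orP [/eqP ->|zs].
  apply: le_lt_trans h; by rewrite comparable_le_max // lexx.
apply: IH => //; apply: le_lt_trans h; by rewrite comparable_le_max // lexx orbT.
Qed.

Lemma inj_all q k (N : 'M[C]_q) (S : 'M[C]_k) : spectral_radius N < 1 ->
 (forall (w : 'rV[C]_k) mu, w != 0 -> w *m S = mu *: w -> `|mu| <= 1) ->
 forall X : 'M[C]_(q, k), X - N *m X *m S = 0 -> X = 0.
Proof.
case: q N => [|q'] N hr HS X HX; first by rewrite [X]flatmx0.
exact: (inj_core (spec_lt hr) HS).
Qed.
End S.

Unset Implicit Arguments. Set Strict Implicit.

Theorem mainTheorem8 (C : numClosedFieldType) (q mu1 mu2 p : nat)
  (P22 Q22 Theta2 Xi : 'M[C]_q) (D : 'M[C]_(p, mu1 + mu1)) :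
  ~~ odd q ->
  posdef_real P22 ->
  posdef_real Q22 ->
  antisym_real Theta2 ->
  Theta2 \in unitmx ->
  psd_herm (P22 + 'i *: Theta2) ->
  antisym_real Xi ->
  real_mx D ->
  D *m D^T = 1%:M ->
  let N := invmx Q22 *m Xi in
  let S := Theta2 *m invmx P22 in
  let Delta := D *m Jmx C mu1 *m D^T in
  spectral_radius N < 1 ->
  [/\ invertible_on_real (fun X : 'M[C]_(q, q) => X - N *m X *m S),
      invertible_on_real (fun X : 'M[C]_(q, mu2 + mu2) => X - N *m X *m Jmx C mu2)
    & invertible_on_real (fun X : 'M[C]_(q, p) => X - N *m X *m Delta)].
Proof.
move=> _ hP hQ hT _ hpsd hXi rD hDD N S Delta hr.
have rN : real_mx N by apply: realM; [apply: realV; exact: hQ.1.1|exact: hXi.1].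
have rJ : forall m, real_mx (Jmx C m) by move=> m; apply/realE; apply: J_real.
split.
- apply: inv_of_inj => //.
    by apply: realM; [exact: hT.1|apply: realV; exact: hP.1.1].
  apply: inj_all => //; exact: boundS.
- apply: inv_of_inj => //.
  apply: inj_all => //; apply: boundT; [exact: J_tr|exact: psd_J].
- apply: inv_of_inj => //.
    by apply: realM; [apply: realM|apply: realT].
  apply: inj_all => //; apply: boundT.
    by rewrite /Delta !trmx_mul trmxK J_tr mulNmx mulmxN mulmxA.
  move=> x; have := psd_J (D^T *m x).
  have cD : ctrmx (D^T) = D by rewrite /ctrmx -map_trmx trmxK (realE D).1.
  have eD : D *m (1%:M + 'i *: Jmx C mu1) *m D^T = 1%:M + 'i *: Delta.
    by rewrite mulmxDr mulmx1 mulmxDl hDD -scalemxAr -scalemxAl.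
  by rewrite ctrmx_mul cD mulmxA -(mulmxA (ctrmx x *m D)) -(mulmxA (ctrmx x)) (mulmxA D) eD.
Qed.
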